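(* The set $\mathcal S(X)$ of skew-convex functions $X\to K$, equipped with pointwise addition and the skew product $\diamond$, is a ring with identity (the constant function $1$).
   Context: Let $K$ be a skew field, $K^*=K\setminus\{0\}$, and let $X$ be a nonempty set on which $K^*$ acts on the left, written $(a,x)\mapsto{}^{a}x$. $\mathcal F(X)$ is the set of all functions $X\to K$ with pointwise addition; the constant function with value $a\in K$ is denoted $a$. The skew product of $f,g\in\mathcal F(X)$ is $(f\diamond g)(x)=f({}^{g(x)}x)\,g(x)$ if $g(x)\neq0$ and $0$ if $g(x)=0$. A function $f\in\mathcal F(X)$ is skew convex if $f\diamond(a+b)=f\diamond a+f\diamond b$ for all $a,b\in K$ (viewed as constant functions). $\mathcal S(X)$ denotes the set of skew-convex functions. *)

(* Defs.v *)
From HB Require Import structures.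
From mathcomp Require Import all_boot all_algebra.
Set Implicit Arguments. Unset Strict Implicit. Unset Printing Implicit Defensive.
Import GRing.Theory.
Local Open Scope ring_scope.

Definition skew_field (K : unitRingType) : Prop :=
  forall a : K, a != 0 -> a \is a GRing.unit.

(* A left action of K^* = K \ {0} on X, given by act : K -> X -> X
   (the values of act at 0 are irrelevant). *)
Definition left_action_Kstar (K : unitRingType) (X : Type) (act : K -> X -> X) : Prop :=
  (forall x, act 1 x = x) /\
  (forall a b x, a != 0 -> b != 0 -> act (a * b) x = act a (act b x)).

Section Skew.
Variables (K : unitRingType) (X : Type) (act : K -> X -> X).

Definition fadd (f g : X -> K) : X -> K := fun x => f x + g x.
Definition fopp (f : X -> K) : X -> K := fun x => - f x.
Definition fconst (a : K) : X -> K := fun _ => a.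

Definition skew_prod (f g : X -> K) : X -> K :=
  fun x => if g x == 0 then 0 else f (act (g x) x) * g x.

Definition skew_convex (f : X -> K) : Prop :=
  forall a b : K, skew_prod f (fconst (a + b)) =
                  fadd (skew_prod f (fconst a)) (skew_prod f (fconst b)).
End Skew.

Definition ring_with_identity_on (T : Type) (P : T -> Prop)
  (add : T -> T -> T) (opp : T -> T) (zero : T) (mul : T -> T -> T) (one : T) : Prop :=
  P zero /\ P one /\
  (forall f g, P f -> P g -> P (add f g)) /\
  (forall f, P f -> P (opp f)) /\
  (forall f g, P f -> P g -> P (mul f g)) /\
  (forall f g h, P f -> P g -> P h -> add f (add g h) = add (add f g) h) /\
  (forall f g, P f -> P g -> add f g = add g f) /\
  (forall f, P f -> add zero f = f) /\
  (forall f, P f -> add (opp f) f = zero) /\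
  (forall f g h, P f -> P g -> P h -> mul f (mul g h) = mul (mul f g) h) /\
  (forall f, P f -> mul one f = f) /\
  (forall f, P f -> mul f one = f) /\
  (forall f g h, P f -> P g -> P h -> mul f (add g h) = add (mul f g) (mul f h)) /\
  (forall f g h, P f -> P g -> P h -> mul (add f g) h = add (mul f h) (mul g h)).

(* Main.v *)
Require Import Defs.
From mathcomp Require Import all_boot all_algebra.
From Stdlib Require Import FunctionalExtensionality.
Import GRing.Theory.
Local Open Scope ring_scope.

Section H.
Variables (K : unitRingType) (X : Type) (act : K -> X -> X).
Hypothesis hK : skew_field K.
Hypothesis hA : left_action_Kstar act.

Lemma mul_neq0 (a b : K) : a != 0 -> b != 0 -> a * b != 0.
Proof.
move=> ha hb; have ua := hK a ha; have ub := hK b hb.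
apply/negP => /eqP e.
have : (a * b) \is a GRing.unit by rewrite unitrMl.
by rewrite e unitr0.
Qed.

Lemma sp_assoc (f g h : X -> K) :
  skew_prod act f (skew_prod act g h) = skew_prod act (skew_prod act f g) h.
Proof.
apply: functional_extensionality => x; rewrite /skew_prod.
case: (eqVneq (h x) 0) => hx; first by rewrite eqxx.
have [gx|gx] := boolP (g (act (h x) x) == 0).
  by move/eqP: gx => gx; rewrite gx mul0r eqxx.
rewrite (negbTE (mul_neq0 _ _ gx hx)) mulrA.
by rewrite (proj2 hA _ _ _ gx hx).
Qed.

Lemma sp_pt (f u : X -> K) x :
  skew_prod act f u x = skew_prod act f (@fconst K X (u x)) x.
Proof. by []. Qed.

Lemma sp_distl (f u v : X -> K) : skew_convex act f ->
  skew_prod act f (fadd u v) = fadd (skew_prod act f u) (skew_prod act f v).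
Proof.
move=> cf; apply: functional_extensionality => x.
rewrite /fadd sp_pt (sp_pt f u) (sp_pt f v).
by have := f_equal (fun F => F x) (cf (u x) (v x)).
Qed.

Lemma sp_distr (f g h : X -> K) :
  skew_prod act (fadd f g) h = fadd (skew_prod act f h) (skew_prod act g h).
Proof.
apply: functional_extensionality => x; rewrite /skew_prod /fadd.
by case: (h x == 0); rewrite ?addr0 // mulrDl.
Qed.

Lemma sp_1l (f : X -> K) : skew_prod act (@fconst K X 1) f = f.
Proof.
apply: functional_extensionality => x; rewrite /skew_prod /fconst mul1r.
by case: eqP.
Qed.

Lemma sp_1r (f : X -> K) : skew_prod act f (@fconst K X 1) = f.
Proof.
apply: functional_extensionality => x; rewrite /skew_prod /fconst oner_eq0.
by rewrite mulr1 (proj1 hA).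
Qed.
Lemma sp_opp (f u : X -> K) :
  skew_prod act (fopp f) u = fopp (skew_prod act f u).
Proof.
apply: functional_extensionality => x; rewrite /skew_prod /fopp.
by case: (u x == 0); rewrite ?oppr0 ?mulNr.
Qed.
End H.

Theorem theorem2p4 (K : unitRingType) (X : Type) (act : K -> X -> X) :
  skew_field K -> inhabited X -> left_action_Kstar act ->
  ring_with_identity_on (skew_convex act)
    (@fadd K X) (@fopp K X) (@fconst K X 0) (skew_prod act) (@fconst K X 1).
Proof.
move=> hK _ hA.
have fe := functional_extensionality.
split.
  move=> a b; apply: fe => x; rewrite /skew_prod /fadd /fconst.
  by case: (_ == 0); case: (_ == 0); case: (_ == 0); rewrite ?mul0r ?addr0.
split.
  by move=> a b; rewrite !sp_1l.
split.
  by move=> f g cf cg a b; rewrite !sp_distr cf cg; apply: fe => x;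
     rewrite /fadd addrACA.
split.
  move=> f cf a b; rewrite !sp_opp cf; apply: fe => x.
  by rewrite /fadd /fopp opprD.
split.
  move=> f g cf cg a b.
  by rewrite -!(@sp_assoc K X act hK hA) cg (@sp_distl K X act f _ _ cf).
split.
  by move=> f g h _ _ _; apply: fe => x; rewrite /fadd addrA.
split.
  by move=> f g _ _; apply: fe => x; rewrite /fadd addrC.
split.
  by move=> f _; apply: fe => x; rewrite /fadd /fconst add0r.
split.
  by move=> f _; apply: fe => x; rewrite /fadd /fopp /fconst addNr.
split.
  by move=> f g h _ _ _; exact: (@sp_assoc K X act hK hA).
split.
  by move=> f _; apply: sp_1l.
split.
  by move=> f _; exact: (@sp_1r K X act hA).
split.
  by move=> f g h cf _ _; apply: sp_distl.
by move=> f g h _ _ _; apply: sp_distr.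
Qed.
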